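(* Let $(V,\omega)=(\mathbb{R}^{2d},\sum_i dx_i\wedge dy_i)$ and $n\ge1$. Identify $(V\times V)^{\times n}$ with $T^*(V^{\times n})$ via, in each factor, $((x,y),(x',y'))\mapsto(q,q',p,p')$ with $q=\tfrac{x+x'}2$, $q'=\tfrac{y+y'}2$, $p=y'-y$, $p'=x-x'$, where $Q=(q,q')\in V$ is the base point and $(p,p')$ the covector. Let $\mathscr{L}=\{(z_1,z_1',\dots,z_n,z_n')\in(V\times V)^{\times n}: z_i'=z_{i+1},\ i=1,\dots,n\}$ with indices mod $n$ ($z_{n+1}=z_1$). Then $\mathscr{L}$ is a Lagrangian subspace of $T^*(V^{\times n})$. If $n$ is odd, $\mathscr{L}$ is the graph of $dF$ for the quadratic function $F(Q_1,\dots,Q_n)=2\sum_{1\le i<j\le n}(-1)^{i+j-1}\omega(Q_i,Q_j)$. If $n$ is even, $\mathscr{L}$ is not given by a generating function (it is not the graph of the differential of a function on $V^{\times n}$).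
   Context: The symplectic form on $(V\times V)^{\times n}$ is $(\omega\ominus\omega)^{\oplus n}$, where $\omega\ominus\omega=dx'\wedge dy'-dx\wedge dy$ on $V\times V$; the identification above is a linear symplectomorphism onto $T^*(V^{\times n})$ with its canonical form $\sum (dq\wedge dp+dq'\wedge dp')$. Here $\omega((x,y),(x',y'))=x\cdot y'-y\cdot x'$. *)

(* Defs.v *)
From HB Require Import structures.
From mathcomp Require Import all_boot all_order all_algebra.
From mathcomp Require Import all_classical all_reals all_analysis.
Set Implicit Arguments. Unset Strict Implicit. Unset Printing Implicit Defensive.
Import Order.TTheory GRing.Theory Num.Theory.
Local Open Scope ring_scope.
Local Open Scope classical_set_scope.

Definition V (R : realType) (d : nat) := ('rV[R]_d * 'rV[R]_d)%type.

Definition dotv (R : realType) (d : nat) (u v : 'rV[R]_d) : R :=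
  \sum_(k < d) u 0 k * v 0 k.

Definition omega (R : realType) (d : nat) (z z' : V R d) : R :=
  dotv z.1 z'.2 - dotv z.2 z'.1.

(* V^{x n}: points (Q_1,...,Q_n), indices 0..n-1 *)
Definition Vn (R : realType) (n d : nat) := {ffun 'I_n -> V R d}.

(* T^*(V^{x n}) = V^{x n} x (V^{x n})^*, a point is (Q, P) with base point
   Q = (Q_i)_i, Q_i = (q_i, q'_i), and covector P = (P_i)_i, P_i = (p_i, p'_i). *)
Definition Tstar (R : realType) (n d : nat) := (Vn R n d * Vn R n d)%type.

Definition pairing (R : realType) (n d : nat) (P v : Vn R n d) : R :=
  \sum_(i < n) (dotv (P i).1 (v i).1 + dotv (P i).2 (v i).2).

Definition can_form (R : realType) (n d : nat) (u w : Tstar R n d) : R :=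
  pairing w.2 u.1 - pairing u.2 w.1.

Definition is_subspace (R : realType) (n d : nat) (L : set (Tstar R n d)) : Prop :=
  L 0 /\ (forall (a : R) (u w : Tstar R n d), L u -> L w -> L (a *: u + w)).

Definition lagrangian (R : realType) (n d : nat) (L : set (Tstar R n d)) : Prop :=
  is_subspace L /\
  (forall u : Tstar R n d, L u <-> (forall w, L w -> can_form u w = 0)).

Definition Phi (R : realType) (n d : nat) (z : 'I_n -> V R d * V R d) :
  Tstar R n d :=
  ([ffun i => (2^-1 *: ((z i).1.1 + (z i).2.1), 2^-1 *: ((z i).1.2 + (z i).2.2))],
   [ffun i => ((z i).2.2 - (z i).1.2, (z i).1.1 - (z i).2.1)]).

(* script L: z'_i = z_{i+1}, indices mod n; z i = (z_i, z'_i) *)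
Definition scriptL (R : realType) (n d : nat) : set (Tstar R n d) :=
  [set w | exists z : 'I_n -> V R d * V R d,
      (forall i : 'I_n, (z i).2 = (z (ordS i)).1) /\ Phi z = w].

(* differential of F at Q applied to v, as the derivative of t |-> F (Q + t v)
   at t = 0; graph of dF = {(Q,P) | dF(Q) = <P, .>} *)
Definition graph_dF (R : realType) (n d : nat) (F : Vn R n d -> R) :
  set (Tstar R n d) :=
  [set w | forall v : Vn R n d,
      derivable (fun t : R => F (w.1 + t *: v)) 0 1 /\
      (fun t : R => F (w.1 + t *: v))^`() 0 = pairing w.2 v].

(* F(Q_1..Q_n) = 2 sum_{1<=i<j<=n} (-1)^(i+j-1) omega(Q_i,Q_j);
   with 0-based indices i,j the sign exponent is (i+1)+(j+1)-1 = i+j+1. *)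
Definition Fgen (R : realType) (n d : nat) (Q : Vn R n d) : R :=
  2 * \sum_(i < n) \sum_(j < n | (i < j)%N)
        (-1) ^+ (i + j + 1) * omega (Q i) (Q j).

(* Main.v *)
Require Import Defs.
From HB Require Import structures.
From mathcomp Require Import all_boot all_order all_algebra.
From mathcomp Require Import all_classical all_reals all_analysis.
From mathcomp Require Import ring lra.
Set Implicit Arguments. Unset Strict Implicit.
Import Order.TTheory GRing.Theory Num.Theory.
Local Open Scope ring_scope.
Local Open Scope classical_set_scope.
Lemma poly2_derive (R : realType) (a b c : R) :
  is_derive (0:R) (1:R) (fun t : R => a + t * b + t ^+ 2 * c) b.
Proof.
apply: is_derive_eq.
by rewrite expr0n /= !scaler0 !scale0r !add0r !scaler0 addr0 mul1r; exact: mulr1.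
Qed.

Lemma omegaE (R : realType) d (a b : V R d) :
  omega a b = \sum_(k < d) (a.1 0 k * b.2 0 k - a.2 0 k * b.1 0 k).
Proof. by rewrite /omega /dotv -sumrB. Qed.

Lemma omegaDl (R : realType) d (a b c : V R d) t :
  omega (a + t *: b) c = omega a c + t * omega b c.
Proof.
rewrite !omegaE mulr_sumr -big_split; apply: eq_bigr => k _ /=; rewrite !mxE; ring.
Qed.

Lemma omegaDr (R : realType) d (a b c : V R d) t :
  omega c (a + t *: b) = omega c a + t * omega c b.
Proof.
rewrite !omegaE mulr_sumr -big_split; apply: eq_bigr => k _ /=; rewrite !mxE; ring.
Qed.

Definition beta (R : realType) n d (Q W : Vn R n d) : R :=
  2 * \sum_(i < n) \sum_(j < n | (i < j)%N)
        (-1) ^+ (i + j + 1) * omega (Q i) (W j).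

Lemma betaDl (R : realType) n d (Q v W : Vn R n d) t :
  beta (Q + t *: v) W = beta Q W + t * beta v W.
Proof.
rewrite /beta mulrCA -mulrDr; congr (_ * _).
rewrite mulr_sumr -big_split; apply: eq_bigr => i _.
rewrite mulr_sumr -big_split; apply: eq_bigr => j _.
by rewrite !ffunE omegaDl mulrDr mulrCA.
Qed.

Lemma betaDr (R : realType) n d (Q v W : Vn R n d) t :
  beta W (Q + t *: v) = beta W Q + t * beta W v.
Proof.
rewrite /beta mulrCA -mulrDr; congr (_ * _).
rewrite mulr_sumr -big_split; apply: eq_bigr => i _.
rewrite mulr_sumr -big_split; apply: eq_bigr => j _.
by rewrite !ffunE omegaDr mulrDr mulrCA.
Qed.

Lemma Fexp (R : realType) n d (Q v : Vn R n d) t :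
  Fgen (Q + t *: v) = Fgen Q + t * (beta Q v + beta v Q) + t ^+ 2 * Fgen v.
Proof.
have FE : forall W : Vn R n d, Fgen W = beta W W by [].
rewrite !FE betaDl !betaDr; ring.
Qed.

Lemma deriv_F (R : realType) n d (Q v : Vn R n d) :
  derivable (fun t : R => Fgen (Q + t *: v)) 0 1 /\
  (fun t : R => Fgen (Q + t *: v))^`() 0 = beta Q v + beta v Q.
Proof.
have -> : (fun t : R => Fgen (Q + t *: v)) =
  (fun t : R => Fgen Q + t * (beta Q v + beta v Q) + t ^+ 2 * Fgen v).
  by apply: funext => t; apply: Fexp.
have D := poly2_derive (Fgen Q) (beta Q v + beta v Q) (Fgen v).
split; first exact: ex_derive.
by rewrite derive1E; exact: derive_val.
Qed.

Lemma graph_FE (R : realType) n d (u : Tstar R n d) :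
  graph_dF (@Fgen R n d) u <-> (forall v, pairing u.2 v = beta u.1 v + beta v u.1).
Proof.
split.
  by move=> h v; have [_ <-] := h v; have [_ ->] := deriv_F u.1 v.
move=> h v; have [D1 D2] := deriv_F u.1 v; split => //; by rewrite D2 h.
Qed.

Lemma ordS_inord n' (i : 'I_n'.+1) : ordS i = inord i.+1.
Proof.
apply: val_inj => /=.
case: (ltnP i.+1 n'.+1) => h.
  by rewrite modn_small // inordK.
have e : i.+1 = n'.+1 by apply/eqP; rewrite eqn_leq h ltn_ord.
by rewrite e modnn /inord /insubd insubF //= ltnn.
Qed.

Lemma U_tele (R : realType) (A : nat -> R) m :
  \sum_(i < m) (-1)^+i * (A i + A i.+1) = A 0%N - (-1)^+m * A m.
Proof.
elim: m => [|m IH]; first by rewrite big_ord0 expr0 mul1r subrr.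
rewrite big_ord_recr /= IH exprS; ring.
Qed.

Lemma inord_last n' : (inord n'.+1 : 'I_n'.+1) = ord0.
Proof. by apply: val_inj; rewrite /= /inord /insubd insubF //= ltnn. Qed.

Lemma Sf_odd (R : realType) n' (a b : 'I_n'.+1 -> R) : odd n'.+1 ->
  \sum_(i < n'.+1) \sum_(j < n'.+1 | (i < j)%N)
     (-1)^+(i + j + 1) * ((a i + a (ordS i)) * b j - b i * (a j + a (ordS j)))
  = \sum_(k < n'.+1) (a k - a (ordS k)) * b k.
Proof.
move=> hodd.
pose A := fun m : nat => a (inord m).
have aE : forall i : 'I_n'.+1, a i = A i by move=> i; rewrite /A inord_val.
have aSE : forall i : 'I_n'.+1, a (ordS i) = A i.+1 by move=> i; rewrite ordS_inord.
have T1 : forall k : 'I_n'.+1,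
    \sum_(i < n'.+1 | (i < k)%N) (-1)^+(i + k + 1) * (a i + a (ordS i))
    = (-1)^+k.+1 * (A 0%N - (-1)^+k * A k).
  move=> k; rewrite -U_tele mulr_sumr.
  rewrite (big_ord_widen n'.+1 (fun i => (-1)^+k.+1 * ((-1)^+i * (A i + A i.+1)))
             (ltnW (ltn_ord k))).
  apply: eq_bigr => i _; rewrite aE aSE -addnA addn1 exprD; ring.
have T2 : forall k : 'I_n'.+1,
    \sum_(j < n'.+1 | (k < j)%N) (-1)^+(k + j + 1) * (a j + a (ordS j))
    = (-1)^+k.+1 * ((A 0%N - (-1)^+n'.+1 * A n'.+1) - (A 0%N - (-1)^+k.+1 * A k.+1)).
  move=> k; rewrite -!U_tele.
  rewrite (big_ord_widen n'.+1 (fun i => (-1)^+i * (A i + A i.+1)) (ltn_ord k)).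

  rewrite [X in _ = _ * (X - _)](bigID (fun j : 'I_n'.+1 => (j < k.+1)%N)) /= addrAC subrr add0r mulr_sumr.
  apply: eq_big => [j|j _]; first by rewrite ltnS ltnNge.
  by rewrite aE aSE addnAC addn1 exprD mulrA.
rewrite (eq_bigr (fun i : 'I_n'.+1 => \sum_(j < n'.+1 | (i < j)%N)
     (-1)^+(i + j + 1) * ((a i + a (ordS i)) * b j)
   - b i * \sum_(j < n'.+1 | (i < j)%N) (-1)^+(i + j + 1) * (a j + a (ordS j)))); last first.
  move=> i _; rewrite mulr_sumr -sumrB; apply: eq_bigr => j _; ring.
rewrite sumrB.
rewrite (exchange_big_dep xpredT) //=.
rewrite -sumrB; apply: eq_bigr => k _.
rewrite (eq_bigr (fun i : 'I_n'.+1 => b k * ((-1)^+(i + k + 1) * (a i + a (ordS i))))); last first.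
  by move=> i _; ring.
rewrite -mulr_sumr T1 T2 aE aSE.
have An : A n'.+1 = A 0%N by rewrite /A inord_last; congr a; apply: val_inj; rewrite /= inordK.
have sn : (-1)^+n'.+1 = -1 :> R by rewrite -signr_odd hodd expr1.
rewrite An sn exprS.
have hs : (-1)^+k * (-1)^+k = 1 :> R by rewrite -exprD -signr_odd addnn odd_double expr0.
transitivity ((-1)^+k * (-1)^+k * ((A k - A k.+1) * b k)); first ring.
by rewrite hs mul1r.
Qed.

Lemma key_odd (R : realType) n' d (z : 'I_n'.+1 -> V R d * V R d) (v : Vn R n'.+1 d) :
  odd n'.+1 -> (forall i, (z i).2 = (z (ordS i)).1) ->
  beta (Phi z).1 v + beta v (Phi z).1 = pairing (Phi z).2 v.
Proof.
move=> hodd hz.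
pose X k i := (z i).1.1 0 k. pose Y k i := (z i).1.2 0 k.
pose VX k i := (v i).1 0 k. pose VY k i := (v i).2 0 k.
pose G k (i j : 'I_n'.+1) := (-1)^+(i + j + 1) *
  (((X k i + X k (ordS i)) * VY k j - VY k i * (X k j + X k (ordS j)))
   - ((Y k i + Y k (ordS i)) * VX k j - VX k i * (Y k j + Y k (ordS j)))).
have E : forall i j : 'I_n'.+1, omega ((Phi z).1 i) (v j) + omega (v i) ((Phi z).1 j) =
   2^-1 * \sum_(k < d) (((X k i + X k (ordS i)) * VY k j - VY k i * (X k j + X k (ordS j)))
   - ((Y k i + Y k (ordS i)) * VX k j - VX k i * (Y k j + Y k (ordS j)))).
  move=> i j; rewrite !omegaE -big_split mulr_sumr; apply: eq_bigr => k _.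
  by rewrite /Phi /= !ffunE /= !hz !mxE /X /Y /VX /VY; ring.
have LHS : beta (Phi z).1 v + beta v (Phi z).1 =
    \sum_(k < d) \sum_(i < n'.+1) \sum_(j < n'.+1 | (i < j)%N) G k i j.
  rewrite /beta -mulrDr -big_split mulr_sumr.
  rewrite (eq_bigr (fun i : 'I_n'.+1 => \sum_(k < d) \sum_(j < n'.+1 | (i < j)%N) G k i j)); last first.
    move=> i _; rewrite -big_split mulr_sumr /= -exchange_big /=.
    apply: eq_bigr => j _; rewrite -mulrDr E !mulr_sumr; apply: eq_bigr => k _.
    by rewrite /G; field.
  exact: exchange_big.
have RHS : pairing (Phi z).2 v = \sum_(k < d)
   (\sum_(i < n'.+1) (X k i - X k (ordS i)) * VY k i - \sum_(i < n'.+1) (Y k i - Y k (ordS i)) * VX k i).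
  rewrite /pairing (eq_bigr (fun i : 'I_n'.+1 => \sum_(k < d)
     ((X k i - X k (ordS i)) * VY k i - (Y k i - Y k (ordS i)) * VX k i))); last first.
    move=> i _; rewrite /dotv -big_split; apply: eq_bigr => k _.
    by rewrite /Phi /= !ffunE /= !hz !mxE /X /Y /VX /VY; ring.
  by rewrite exchange_big; apply: eq_bigr => k _; rewrite -sumrB.
rewrite LHS RHS; apply: eq_bigr => k _.
rewrite -(Sf_odd (X k) (VY k) hodd) -(Sf_odd (Y k) (VX k) hodd) -sumrB.
apply: eq_bigr => i _; rewrite -sumrB; apply: eq_bigr => j _; rewrite /G; ring.
Qed.
Lemma can_form_Phi (R : realType) n d (z w : 'I_n -> V R d * V R d) :
  can_form (Phi z) (Phi w) =
  \sum_i (omega (z i).2 (w i).2 - omega (z i).1 (w i).1).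
Proof.
rewrite /can_form /pairing /= -sumrB; apply: eq_bigr => i _.
rewrite !ffunE /= !omegaE /dotv -!big_split -!sumrB /=.
by apply: eq_bigr => k _; rewrite !mxE; field.
Qed.

Definition PhiInv (R : realType) n d (u : Tstar R n d) : 'I_n -> V R d * V R d :=
  fun i => (((u.1 i).1 + 2^-1 *: (u.2 i).2, (u.1 i).2 - 2^-1 *: (u.2 i).1),
            ((u.1 i).1 - 2^-1 *: (u.2 i).2, (u.1 i).2 + 2^-1 *: (u.2 i).1)).

Lemma PhiK (R : realType) n d (u : Tstar R n d) : Phi (PhiInv u) = u.
Proof.
case: u => Q P; rewrite /Phi /PhiInv /=; congr (_,_); apply/ffunP => i;
rewrite !ffunE; case: (Q i) => [q1 q2]; case: (P i) => [p1 p2] /=;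
by congr (_,_); apply/matrixP => a b; rewrite !mxE; field.
Qed.

Lemma orth_L (R : realType) n d (u w : Tstar R n d) :
  scriptL u -> scriptL w -> can_form u w = 0.
Proof.
move=> [z [hz <-]] [y [hy <-]]; rewrite can_form_Phi sumrB.
rewrite [X in X - _](eq_bigr (fun i => omega (z (ordS i)).1 (y (ordS i)).1)); last first.
  by move=> i _; rewrite hz hy.
by rewrite [X in _ - X](reindex_inj (@ordS_inj n)) subrr.
Qed.

Lemma omega_inj (R : realType) d (a b : V R d) :
  (forall e, omega a e = omega b e) -> a = b.
Proof.
move=> h.
have h1 : forall k, a.1 0 k = b.1 0 k.
  have := h (0, a.1 - b.1); rewrite !omegaE => /eqP; rewrite -subr_eq0 -sumrB => /eqP H.
  have H2 : \sum_(k < d) (a.1 0 k - b.1 0 k) ^+ 2 = 0.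
    by rewrite -[RHS]H; apply: eq_bigr => k _; rewrite /= !mxE; ring.
  move=> k; apply/eqP; rewrite -subr_eq0 -sqrf_eq0; apply/eqP.
  by move: (psumr_eq0P (fun k _ => sqr_ge0 (a.1 0 k - b.1 0 k)) H2) => ->.
have h2 : forall k, a.2 0 k = b.2 0 k.
  have := h (a.2 - b.2, 0); rewrite !omegaE => /eqP; rewrite -subr_eq0 -sumrB => /eqP H.
  have H2 : \sum_(k < d) (a.2 0 k - b.2 0 k) ^+ 2 = 0.
    by rewrite -[RHS]oppr0 -[in RHS]H -sumrN; apply: eq_bigr => k _; rewrite /= !mxE; ring.
  move=> k; apply/eqP; rewrite -subr_eq0 -sqrf_eq0; apply/eqP.
  by move: (psumr_eq0P (fun k _ => sqr_ge0 (a.2 0 k - b.2 0 k)) H2) => ->.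
clear h; case: a b h1 h2 => [a1 a2] [b1 b2] /= h1 h2.
by congr (_,_); apply/matrixP => i k; rewrite (ord1 i).
Qed.

Lemma L_of_orth (R : realType) n d (u : Tstar R n d) :
  (forall w, scriptL w -> can_form u w = 0) -> scriptL u.
Proof.
move=> H; exists (PhiInv u); split; last exact: PhiK.
move=> i; apply: omega_inj => e.
pose y : 'I_n -> V R d := fun j => if j == ordS i then e else 0.
have Lw : scriptL (Phi (fun j => (y j, y (ordS j)))) by exists (fun j => (y j, y (ordS j))).
have := H _ Lw; rewrite -{1}(PhiK u) can_form_Phi sumrB /= => /eqP; rewrite subr_eq0 => /eqP.
have om0 : forall a : V R d, omega a 0 = 0.
  by move=> a; rewrite omegaE big1 // => k _; rewrite !mxE !mulr0 subrr.
rewrite (bigD1 i) //= big1; last first.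
  by move=> j /negbTE hj; rewrite /y (inj_eq (@ordS_inj n)) hj om0.
rewrite (bigD1 (ordS i)) //= big1; last first.
  by move=> j /negbTE hj; rewrite /y hj om0.
by rewrite /y !eqxx !addr0.
Qed.


Lemma lagr_L (R : realType) n d : lagrangian (@scriptL R n d).
Proof.
split; last first.
  move=> u; split; first by move=> Lu w Lw; exact: orth_L.
  exact: L_of_orth.
split.
  exists (fun _ => (0, 0)); split => //.
  rewrite /Phi; congr (_,_); apply/ffunP => i; rewrite !ffunE /=;
  by congr (_,_); apply/matrixP => a b; rewrite !mxE; field.
move=> a u w [z [hz <-]] [y [hy <-]].
exists (fun i => a *: z i + y i); split.
  by move=> i /=; rewrite hz hy.
rewrite /Phi /=; congr (_,_); apply/ffunP => i; rewrite !ffunE /=;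
by congr (_,_); apply/matrixP => b c; rewrite !mxE; field.
Qed.

Lemma sign_sq (R : realType) (m : nat) : (-1)^+m * (-1)^+m = 1 :> R.
Proof. by rewrite -exprD -signr_odd addnn odd_double expr0. Qed.

Lemma even_case (R : realType) n d : (1 <= d)%N -> (1 <= n)%N -> ~~ odd n ->
  forall F : Vn R n d -> R, @scriptL R n d <> graph_dF F.
Proof.
move=> hd hn hev F HL.
pose e : 'rV[R]_d := const_mx 1.
pose s (i : 'I_n) : R := (-1)^+i.
pose z := fun i : 'I_n => ((s i *: e, (0:'rV[R]_d)), (- s i *: e, (0:'rV[R]_d))).
have hz : forall i, (z i).2 = (z (ordS i)).1.
  move=> i; rewrite /z /=; congr (_, _); congr (_ *: _); rewrite /s.
  have hO : odd (ordS i) = ~~ odd i by rewrite /= odd_mod ?(negbTE hev).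
  rewrite -[in RHS]signr_odd hO -[in LHS]signr_odd.
  by case: (odd i); rewrite ?expr1 ?expr0 ?opprK.
pose z0 := fun i : 'I_n => (((0:'rV[R]_d), (0:'rV[R]_d)), ((0:'rV[R]_d), (0:'rV[R]_d))).
have L1 : scriptL (Phi z) by exists z.
have L0 : scriptL (Phi z0) by exists z0.
rewrite HL in L1 L0.
have Qeq : (Phi z).1 = (Phi z0).1.
  apply/ffunP => i; rewrite !ffunE /=.
  by congr (_,_); apply/matrixP => a b; rewrite !mxE; ring.
have [_ h1] := L1 (Phi z).2.
have [_ h0] := L0 (Phi z).2.
rewrite Qeq h0 in h1.
have P0 : pairing (Phi z0).2 (Phi z).2 = 0.
  rewrite /pairing big1 // => i _; rewrite /dotv !big1 ?addr0 // => k _;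
  by rewrite /Phi /= ffunE /= !mxE; ring.
have P1 : pairing (Phi z).2 (Phi z).2 = 4 *+ d *+ n.
  rewrite /pairing -[n in RHS]card_ord -sumr_const; apply: eq_bigr => i _.
  rewrite /dotv -[d in RHS]card_ord -sumr_const -big_split; apply: eq_bigr => k _.
  rewrite /Phi /= ffunE /= !mxE.
  transitivity (4 * (s i * s i)); first ring.
  by rewrite /s sign_sq mulr1.
move: h1; rewrite P0 P1 => /eqP; apply/negP.
rewrite eq_sym !mulrn_eq0 !negb_or -!lt0n hd hn /=.
have h4 : (0:R) < 4 by lra.
by rewrite gt_eqF.
Qed.

Theorem mainTheorem11 (R : realType) (d n : nat) (hd : (1 <= d)%N) (hn : (1 <= n)%N) :
  lagrangian (@scriptL R n d) /\
  (odd n -> @scriptL R n d = graph_dF (@Fgen R n d)) /\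
  (~~ odd n -> forall F : Vn R n d -> R, @scriptL R n d <> graph_dF F).
Proof.
split; first exact: lagr_L.
split; last exact: even_case.
case: n hn => // n' _ hodd.
have sub : @scriptL R n'.+1 d `<=` graph_dF (@Fgen R n'.+1 d).
  move=> u [z [hz <-]]; apply/graph_FE => v.
  by rewrite key_odd.
apply/seteqP; split => // u Gu.
apply: L_of_orth => w Lw.
have Gw := sub _ Lw.
rewrite /can_form (proj1 (graph_FE w) Gw) (proj1 (graph_FE u) Gu).
by rewrite [X in _ - X]addrC subrr.
Qed.
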